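(* Consider problem (VP) under the standing assumptions at $\bar x\in Q_0$. Let $\bar x$ be a local Geoffrion properly efficient solution of (VP) and suppose $L(Q;\bar x)\subset T(Q_0;\bar x)$, where $L(Q;\bar x):=\{v\in X: f_i^{\circ}(\bar x,v)\leqq0\ \forall i\in I,\ g_j^{\circ}(\bar x,v)\leqq0\ \forall j\in J(\bar x)\}$. Then there is no $u\in X$ such that $f_i^{\circ}(\bar x,u)\leqq0$ for all $i\in I$, $f_i^{\circ}(\bar x,u)<0$ for at least one $i\in I$, and $g_j^{\circ}(\bar x,u)\leqq 0$ for all $j\in J(\bar x)$.
   Context: Standing setting: $X$ is a Banach space; $I=\{1,\dots,p\}$, $J=\{1,\dots,m\}$; $f_i,g_j\colon X\to\mathbb{R}$; (VP) minimizes $f=(f_1,\dots,f_p)$ over $Q_0:=\{x\in X: g_j(x)\leqq 0,\ j\in J\}$. $J(\bar x):=\{j\in J: g_j(\bar x)=0\}$. Standing assumptions: $f_i$ ($i\in I$), $g_j$ ($j\in J(\bar x)$) locally Lipschitz at $\bar x$; $g_j$ ($j\notin J(\bar x)$) continuous at $\bar x$. $Q:=Q_0\cap\{x: f_i(x)\leqq f_i(\bar x),\ i\in I\}$. Clarke derivative: $F^{\circ}(\bar x,u):=\limsup_{x\to\bar x,\,t\downarrow0}\frac{F(x+tu)-F(x)}{t}$. Tangent cone: $T(\Omega;\bar x):=\{d:\exists t_k\downarrow0,\ \exists d^k\to d,\ \bar x+t_kd^k\in\Omega\ \forall k\}$. Local Geoffrion properly efficient solution: there is a neighborhood $U$ of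 $\bar x$ such that (a) no $x\in U\cap Q_0$ has $f(x)\leqq f(\bar x)$ componentwise with $f(x)\ne f(\bar x)$, and (b) there is $M>0$ such that for every $i\in I$ and every $x\in U\cap Q_0$ with $f_i(x)<f_i(\bar x)$ there exists $j\in I$ with $f_j(x)>f_j(\bar x)$ and $\frac{f_i(\bar x)-f_i(x)}{f_j(x)-f_j(\bar x)}\leqq M$. *)

(* Defs.v *)
From Stdlib Require Import Reals Lra ClassicalEpsilon.
Open Scope R_scope.

Record BanachSpace := {
  carrier :> Type;
  vzero : carrier;
  vadd : carrier -> carrier -> carrier;
  vopp : carrier -> carrier;
  vscal : R -> carrier -> carrier;
  vnorm : carrier -> R;
  vadd_assoc : forall x y z, vadd x (vadd y z) = vadd (vadd x y) z;
  vadd_comm : forall x y, vadd x y = vadd y x;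
  vadd_0 : forall x, vadd x vzero = x;
  vadd_opp : forall x, vadd x (vopp x) = vzero;
  vscal_1 : forall x, vscal 1 x = x;
  vscal_assoc : forall a b x, vscal a (vscal b x) = vscal (a * b) x;
  vscal_distr_v : forall a x y, vscal a (vadd x y) = vadd (vscal a x) (vscal a y);
  vscal_distr_s : forall a b x, vscal (a + b) x = vadd (vscal a x) (vscal b x);
  vnorm_eq0 : forall x, vnorm x = 0 -> x = vzero;
  vnorm_scal : forall a x, vnorm (vscal a x) = Rabs a * vnorm x;
  vnorm_triangle : forall x y, vnorm (vadd x y) <= vnorm x + vnorm y;
  vcomplete : forall u : nat -> carrier,
    (forall eps, eps > 0 -> exists N, forall n k, (n >= N)%nat -> (k >= N)%nat ->
        vnorm (vadd (u n) (vopp (u k))) < eps) ->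
    exists l, forall eps, eps > 0 -> exists N, forall n, (n >= N)%nat ->
        vnorm (vadd (u n) (vopp l)) < eps
}.

Arguments vzero {_}. Arguments vadd {_}. Arguments vopp {_}.
Arguments vscal {_}. Arguments vnorm {_}.

Definition vsub {X : BanachSpace} (x y : X) : X := vadd x (vopp y).

Definition loc_lipschitz {X : BanachSpace} (F : X -> R) (xb : X) : Prop :=
  exists K delta, delta > 0 /\ forall x y : X,
    vnorm (vsub x xb) < delta -> vnorm (vsub y xb) < delta ->
    Rabs (F x - F y) <= K * vnorm (vsub x y).

Definition continuous_at {X : BanachSpace} (F : X -> R) (xb : X) : Prop :=
  forall eps, eps > 0 -> exists delta, delta > 0 /\ forall x : X,
    vnorm (vsub x xb) < delta -> Rabs (F x - F xb) < eps.

Definition is_clarke {X : BanachSpace} (F : X -> R) (xb u : X) (l : R) : Prop :=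
  (forall eps, eps > 0 -> exists delta, delta > 0 /\
     forall (x : X) t, vnorm (vsub x xb) < delta -> 0 < t < delta ->
       (F (vadd x (vscal t u)) - F x) / t <= l + eps) /\
  (forall eps delta, eps > 0 -> delta > 0 ->
     exists (x : X) t, vnorm (vsub x xb) < delta /\ 0 < t < delta /\
       (F (vadd x (vscal t u)) - F x) / t > l - eps).

(* Clarke generalized directional derivative F°(xb; u) (finite for locally
   Lipschitz F; an arbitrary real otherwise, never used in that case). *)
Definition clarke {X : BanachSpace} (F : X -> R) (xb u : X) : R :=
  epsilon (inhabits 0) (fun l => is_clarke F xb u l).

Definition tangent_cone {X : BanachSpace} (Omega : X -> Prop) (xb d : X) : Prop :=
  exists (t : nat -> R) (dk : nat -> X),
    (forall k, t k > 0) /\ Un_cv t 0 /\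
    (forall eps, eps > 0 -> exists N, forall k, (k >= N)%nat -> vnorm (vsub (dk k) d) < eps) /\
    (forall k, Omega (vadd xb (vscal (t k) (dk k)))).

(* Indices are 0-based: I = {0,...,p-1}, J = {0,...,m-1}. *)
Definition Q0 {X : BanachSpace} (m : nat) (g : nat -> X -> R) (x : X) : Prop :=
  forall j, (j < m)%nat -> g j x <= 0.

Definition Qset {X : BanachSpace} (p m : nat) (f g : nat -> X -> R) (xb x : X) : Prop :=
  Q0 m g x /\ forall i, (i < p)%nat -> f i x <= f i xb.

Definition active {X : BanachSpace} (m : nat) (g : nat -> X -> R) (xb : X) (j : nat) : Prop :=
  (j < m)%nat /\ g j xb = 0.

Definition Lcone {X : BanachSpace} (p m : nat) (f g : nat -> X -> R) (xb v : X) : Prop :=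
  (forall i, (i < p)%nat -> clarke (f i) xb v <= 0) /\
  (forall j, active m g xb j -> clarke (g j) xb v <= 0).

(* Local Geoffrion proper efficiency (neighborhood taken as an open ball) *)
Definition local_geoffrion {X : BanachSpace} (p m : nat) (f g : nat -> X -> R) (xb : X) : Prop :=
  exists r, r > 0 /\
  (forall x : X, vnorm (vsub x xb) < r -> Q0 m g x ->
     ~ ((forall i, (i < p)%nat -> f i x <= f i xb) /\
        (exists i, (i < p)%nat /\ f i x <> f i xb))) /\
  (exists M, M > 0 /\
     forall i (x : X), (i < p)%nat -> vnorm (vsub x xb) < r -> Q0 m g x ->
       f i x < f i xb ->
       exists j, (j < p)%nat /\ f j x > f j xb /\
         (f i xb - f i x) / (f j x - f j xb) <= M).

(* Main.v *)
Require Import Defs.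
From Stdlib Require Import Reals Lra Lia Classical ClassicalEpsilon.
Open Scope R_scope.

Section Alg.
Variable X : BanachSpace.
Implicit Types x y z a b c d w : X.

Lemma vadd0l x : vadd vzero x = x.
Proof. rewrite vadd_comm; apply vadd_0. Qed.

Lemma vopp_uniq a b : vadd a b = vzero -> b = vopp a.
Proof.
  intro H. rewrite <- (vadd_0 _ b), <- (vadd_opp _ a), vadd_assoc, (vadd_comm _ b), H.
  apply vadd0l.
Qed.

Lemma vscal0 x : vscal 0 x = vzero.
Proof.
  assert (H : vscal 0 x = vadd (vscal 0 x) (vscal 0 x)).
  { rewrite <- vscal_distr_s. f_equal. ring. }
  assert (H2 : vadd (vadd (vscal 0 x) (vscal 0 x)) (vopp (vscal 0 x)) = vscal 0 x).
  { rewrite <- vadd_assoc, vadd_opp, vadd_0. reflexivity. }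
  rewrite <- H in H2. rewrite vadd_opp in H2. auto.
Qed.

Lemma vnorm0 : vnorm (@vzero X) = 0.
Proof. rewrite <- (vscal0 vzero), vnorm_scal, Rabs_R0. ring. Qed.

Lemma vopp_scal x : vopp x = vscal (-1) x.
Proof.
  symmetry. apply vopp_uniq. rewrite <- (vscal_1 _ x) at 1.
  rewrite <- vscal_distr_s. replace (1 + -1) with 0 by ring. apply vscal0.
Qed.

Lemma vnorm_opp x : vnorm (vopp x) = vnorm x.
Proof. rewrite vopp_scal, vnorm_scal. replace (Rabs (-1)) with 1. ring. rewrite Rabs_left; lra. Qed.

Lemma vnorm_nonneg x : 0 <= vnorm x.
Proof.
  pose proof (vnorm_triangle _ x (vopp x)). rewrite vadd_opp, vnorm0, vnorm_opp in H. lra.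
Qed.

Lemma vswap a b c d : vadd (vadd a b) (vadd c d) = vadd (vadd a c) (vadd b d).
Proof.
  rewrite <- !vadd_assoc. f_equal. rewrite !vadd_assoc. f_equal. apply vadd_comm.
Qed.

Lemma vopp_add x y : vopp (vadd x y) = vadd (vopp x) (vopp y).
Proof.
  symmetry. apply vopp_uniq. rewrite vswap, !vadd_opp. apply vadd_0.
Qed.

Lemma vsub_self x : vsub x x = vzero.
Proof. apply vadd_opp. Qed.

Lemma vsub_addl x y z : vsub (vadd x y) (vadd x z) = vsub y z.
Proof. unfold vsub. rewrite vopp_add, vswap, vadd_opp. apply vadd0l. Qed.

Lemma vsub_addr x w : vsub (vadd x w) x = w.
Proof. unfold vsub. rewrite (vadd_comm _ x), <- vadd_assoc, vadd_opp. apply vadd_0. Qed.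

Lemma vsub_add_shift x w y : vsub (vadd x w) y = vadd (vsub x y) w.
Proof. unfold vsub. rewrite <- !vadd_assoc. f_equal. apply vadd_comm. Qed.

Lemma vscal_zero t : vscal t (@vzero X) = vzero.
Proof. rewrite <- (vscal0 vzero) at 1. rewrite vscal_assoc. replace (t*0) with 0 by ring. apply vscal0. Qed.

Lemma vscal_sub t d u : vscal t (vsub d u) = vsub (vscal t d) (vscal t u).
Proof.
  unfold vsub. rewrite vscal_distr_v. f_equal. apply vopp_uniq.
  rewrite <- vscal_distr_v, vadd_opp. apply vscal_zero.
Qed.

Lemma vsub_add_cancel d u : vadd (vsub d u) u = d.
Proof. unfold vsub. rewrite <- vadd_assoc, (vadd_comm _ (vopp u)), vadd_opp. apply vadd_0. Qed.

End Alg.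

Lemma div_abs_le A t c : t > 0 -> Rabs A <= c * t -> -c <= A / t <= c.
Proof.
  intros Ht H. pose proof (Rle_abs A); pose proof (Rle_abs (-A)); rewrite Rabs_Ropp in *.
  assert (E : A / t * t = A) by (field; lra).
  split; apply (Rmult_le_reg_r t); try lra; rewrite E; lra.
Qed.

Lemma clarke_exists (X : BanachSpace) (F : X -> R) xb u :
  loc_lipschitz F xb -> is_clarke F xb u (clarke F xb u).
Proof.
  intros [K [dL [HdL HL]]].
  assert (Hex : exists l, is_clarke F xb u l).
  2:{ unfold clarke. apply epsilon_spec. exact Hex. }
  pose proof (vnorm_nonneg _ u) as Hu0.
  set (B := Rabs K * vnorm u).
  set (d0 := dL / (1 + vnorm u)).
  assert (Hd0 : d0 > 0) by (unfold d0; apply Rdiv_lt_0_compat; lra).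
  assert (Hd0L : d0 * (1 + vnorm u) = dL) by (unfold d0; field; lra).
  assert (Hq : forall x t, vnorm (vsub x xb) < d0 -> 0 < t < d0 ->
      -B <= (F (vadd x (vscal t u)) - F x) / t <= B).
  { intros x t Hx Ht. apply div_abs_le; [lra|].
    assert (H1 : vnorm (vsub (vadd x (vscal t u)) xb) < dL).
    { rewrite vsub_add_shift. eapply Rle_lt_trans; [apply vnorm_triangle|].
      rewrite vnorm_scal, Rabs_pos_eq by lra. nra. }
    assert (H2 : vnorm (vsub x xb) < dL) by nra.
    eapply Rle_trans; [apply HL; eauto|]. rewrite vsub_addr, vnorm_scal, Rabs_pos_eq by lra.
    unfold B. pose proof (Rle_abs K). pose proof (vnorm_nonneg _ u). assert (0 <= t * vnorm u) by nra. replace (Rabs K * vnorm u * t) with (Rabs K * (t * vnorm u)) by ring. apply Rmult_le_compat_r; auto. }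
  set (U := fun b => exists delta, 0 < delta /\ forall x t, vnorm (vsub x xb) < delta ->
            0 < t < delta -> (F (vadd x (vscal t u)) - F x) / t <= b).
  set (E := fun y => forall b, U b -> y <= b).
  assert (HUB : U B).
  { exists d0; split; auto. intros x t Hx Ht. apply (Hq x t Hx Ht). }
  assert (Hb : bound E) by (exists B; intros y Hy; apply Hy, HUB).
  assert (Hne : exists y, E y).
  { exists (-B). intros b [delta [Hdp Hd]].
    set (t := Rmin delta d0 / 2).
    assert (Ht1 : 0 < t < delta) by (unfold t; pose proof (Rmin_l delta d0);
       pose proof (Rmin_glb_lt delta d0 0 Hdp Hd0); lra).
    assert (Ht2 : 0 < t < d0) by (unfold t; pose proof (Rmin_r delta d0);
       pose proof (Rmin_glb_lt delta d0 0 Hdp Hd0); lra).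
    assert (Hn : vnorm (vsub xb xb) = 0) by (rewrite vsub_self; apply vnorm0).
    pose proof (Hd xb t ltac:(lra) Ht1). pose proof (Hq xb t ltac:(lra) Ht2). lra. }
  destruct (completeness E Hb Hne) as [l [Hl1 Hl2]].
  assert (HlU : forall b, U b -> l <= b).
  { intros b Hbu. apply Hl2. intros y Hy. apply Hy, Hbu. }
  exists l. split.
  - intros eps Heps.
    destruct (classic (exists b, U b /\ b < l + eps)) as [[b [[delta [Hdp Hd]] Hbl]] | Hno].
    + exists delta; split; auto. intros x t Hx Ht. pose proof (Hd x t Hx Ht). lra.
    + exfalso. assert (E (l + eps)).
      { intros b Hbu. destruct (Rle_lt_dec (l+eps) b); auto. exfalso; apply Hno; eauto. }
      pose proof (Hl1 _ H). lra.
  - intros eps delta Heps Hdelta.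
    apply NNPP. intro Hno. assert (U (l - eps)).
    { exists delta; split; auto. intros x t Hx Ht.
      destruct (Rle_lt_dec ((F (vadd x (vscal t u)) - F x) / t) (l - eps)); auto.
      exfalso; apply Hno. exists x, t. repeat split; auto; lra. }
    pose proof (HlU _ H). lra.
Qed.

Lemma eventually_all (p : nat) (P : nat -> nat -> Prop) :
  (forall i, (i < p)%nat -> exists N, forall k, (k >= N)%nat -> P i k) ->
  exists N, forall i, (i < p)%nat -> forall k, (k >= N)%nat -> P i k.
Proof.
  induction p as [|p IH]; intros H.
  - exists 0%nat. intros; lia.
  - destruct IH as [N1 HN1]. { intros i Hi. apply H. lia. }
    destruct (H p ltac:(lia)) as [N2 HN2].
    exists (Nat.max N1 N2). intros i Hi k Hk.
    destruct (Nat.eq_dec i p) as [->|Hne].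
    + apply HN2. lia.
    + apply HN1; lia.
Qed.

Section Tan.
Variable X : BanachSpace.
Variables (t : nat -> R) (dk : nat -> X) (u : X).
Hypothesis Ht : forall k, t k > 0.
Hypothesis Htcv : Un_cv t 0.
Hypothesis Hdk : forall eps, eps > 0 -> exists N, forall k, (k >= N)%nat -> vnorm (vsub (dk k) u) < eps.

Lemma near_small rho : rho > 0 -> exists N, forall k, (k >= N)%nat ->
  t k * (1 + vnorm u) < rho /\ vnorm (vsub (dk k) u) < 1.
Proof.
  intros Hr. pose proof (vnorm_nonneg _ u).
  destruct (Htcv (rho / (1 + vnorm u))) as [N1 HN1].
  { apply Rdiv_lt_0_compat; lra. }
  destruct (Hdk 1 ltac:(lra)) as [N2 HN2].
  exists (Nat.max N1 N2). intros k Hk. split; [|apply HN2; lia].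
  specialize (HN1 k ltac:(lia)). unfold Rdist in HN1.
  rewrite Rminus_0_r, Rabs_pos_eq in HN1 by (pose proof (Ht k); lra).
  apply (Rmult_lt_compat_r (1 + vnorm u)) in HN1; [|lra].
  replace (rho / (1 + vnorm u) * (1 + vnorm u)) with rho in HN1 by (field; lra). lra.
Qed.

Lemma small_step k : vnorm (vsub (dk k) u) < 1 ->
  vnorm (vscal (t k) (dk k)) <= t k * (1 + vnorm u).
Proof.
  intros H. rewrite vnorm_scal, Rabs_pos_eq by (pose proof (Ht k); lra).
  pose proof (vnorm_triangle _ (vsub (dk k) u) u). rewrite vsub_add_cancel in H0.
  pose proof (Ht k). nra.
Qed.

Lemma key (F : X -> R) xb e : loc_lipschitz F xb -> e > 0 ->
  exists N, forall k, (k >= N)%nat ->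
    F (vadd xb (vscal (t k) (dk k))) - F xb <= t k * (clarke F xb u + e).
Proof.
  intros HLip He. pose proof (clarke_exists X F xb u HLip) as [Hc _].
  destruct (Hc (e/2) ltac:(lra)) as [d1 [Hd1 Hd1b]].
  destruct HLip as [K [dL [HdL HL]]].
  set (ed := e / (2 * (Rabs K + 1))).
  assert (Hed : ed > 0) by (unfold ed; apply Rdiv_lt_0_compat; pose proof (Rabs_pos K); lra).
  destruct (near_small (Rmin d1 dL)) as [N1 HN1]. { apply Rmin_glb_lt; lra. }
  destruct (Hdk ed Hed) as [N2 HN2].
  exists (Nat.max N1 N2). intros k Hk.
  destruct (HN1 k ltac:(lia)) as [Hsm Hd1k]. specialize (HN2 k ltac:(lia)).
  pose proof (Rmin_l d1 dL). pose proof (Rmin_r d1 dL).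
  pose proof (vnorm_nonneg _ u). pose proof (Ht k) as Htk.
  assert (Htd1 : 0 < t k < d1) by nra.
  assert (Hn : vnorm (vsub xb xb) = 0) by (rewrite vsub_self; apply vnorm0).
  specialize (Hd1b xb (t k) ltac:(lra) Htd1).
  assert (A2 : F (vadd xb (vscal (t k) u)) - F xb <= t k * (clarke F xb u + e/2)).
  { apply (Rmult_le_compat_r (t k)) in Hd1b; [|lra].
    replace ((F (vadd xb (vscal (t k) u)) - F xb) / t k * t k) with
       (F (vadd xb (vscal (t k) u)) - F xb) in Hd1b by (field; lra). lra. }
  assert (A1 : Rabs (F (vadd xb (vscal (t k) (dk k))) - F (vadd xb (vscal (t k) u)))
      <= K * vnorm (vsub (vadd xb (vscal (t k) (dk k))) (vadd xb (vscal (t k) u)))).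
  { apply HL.
    - rewrite vsub_addr. pose proof (small_step k Hd1k). lra.
    - rewrite vsub_addr, vnorm_scal, Rabs_pos_eq by lra. assert (t k * vnorm u <= t k * (1 + vnorm u)) by (apply Rmult_le_compat_l; lra). lra. }
  rewrite vsub_addl, <- vscal_sub, vnorm_scal, (Rabs_pos_eq (t k)) in A1 by lra.
  pose proof (Rle_abs (F (vadd xb (vscal (t k) (dk k))) - F (vadd xb (vscal (t k) u)))).
  pose proof (vnorm_nonneg _ (vsub (dk k) u)).
  assert (K * (t k * vnorm (vsub (dk k) u)) <= t k * (e / 2)).
  { apply Rle_trans with (Rabs K * (t k * vnorm (vsub (dk k) u))).
    { apply Rmult_le_compat_r; [nra | apply Rle_abs]. }
    assert (Rabs K * vnorm (vsub (dk k) u) <= e/2).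
    { apply Rle_trans with (Rabs K * ed). apply Rmult_le_compat_l; [apply Rabs_pos|lra].
      unfold ed. pose proof (Rabs_pos K).
      apply (Rmult_le_reg_r (2 * (Rabs K + 1))); [lra|].
      replace (Rabs K * (e / (2 * (Rabs K + 1))) * (2 * (Rabs K + 1))) with (Rabs K * e) by (field; lra).
      nra. }
    nra. }
  lra.
Qed.
End Tan.

Theorem corollary5p3 (X : BanachSpace) (p m : nat) (f g : nat -> X -> R) (xb : X)
  (Hxb : Q0 m g xb)
  (Hf : forall i, (i < p)%nat -> loc_lipschitz (f i) xb)
  (Hga : forall j, active m g xb j -> loc_lipschitz (g j) xb)
  (Hgi : forall j, (j < m)%nat -> g j xb <> 0 -> continuous_at (g j) xb)
  (Hgeo : local_geoffrion p m f g xb)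
  (HL : forall v, Lcone p m f g xb v -> tangent_cone (Q0 m g) xb v) :
  ~ exists u : X,
      (forall i, (i < p)%nat -> clarke (f i) xb u <= 0) /\
      (exists i, (i < p)%nat /\ clarke (f i) xb u < 0) /\
      (forall j, active m g xb j -> clarke (g j) xb u <= 0).
Proof.
  intros [u [Hu1 [[i0 [Hi0 Hc]] Hu3]]].
  destruct Hgeo as [r [Hr [_ [M [HM HG]]]]].
  destruct (HL u (conj Hu1 Hu3)) as [t [dk [Ht [Htcv [Hdk HQ]]]]].
  set (c := clarke (f i0) xb u) in *.
  set (e := - c / (4 * M)).
  assert (He : e > 0) by (unfold e; apply Rdiv_lt_0_compat; lra).
  destruct (eventually_all p (fun i k => f i (vadd xb (vscal (t k) (dk k))) - f i xb
      <= t k * (clarke (f i) xb u + e))) as [N1 HN1].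
  { intros i Hi. apply (key X t dk u Ht Htcv Hdk); auto. }
  destruct (key X t dk u Ht Htcv Hdk (f i0) xb (- c / 2) (Hf i0 Hi0) ltac:(lra)) as [N2 HN2].
  destruct (near_small X t dk u Ht Htcv Hdk r Hr) as [N3 HN3].
  set (k := Nat.max N1 (Nat.max N2 N3)).
  specialize (HN2 k ltac:(unfold k; lia)). fold c in HN2.
  destruct (HN3 k ltac:(unfold k; lia)) as [Hs1 Hs2].
  pose proof (small_step X t dk u Ht k Hs2).
  pose proof (Ht k) as Htk.
  set (xk := vadd xb (vscal (t k) (dk k))) in *.
  assert (Hlt : f i0 xk < f i0 xb) by nra.
  assert (Hnr : vnorm (vsub xk xb) < r) by (unfold xk; rewrite vsub_addr; lra).
  destruct (HG i0 xk Hi0 Hnr (HQ k) Hlt) as [j [Hj [Hgt Hrat]]].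
  specialize (HN1 j Hj k ltac:(unfold k; lia)). simpl in HN1. fold xk in HN1.
  specialize (Hu1 j Hj).
  set (D := f j xk - f j xb) in *.
  assert (HD : D > 0) by (unfold D; lra).
  apply (Rmult_le_compat_r D) in Hrat; [|lra].
  replace ((f i0 xb - f i0 xk) / D * D) with (f i0 xb - f i0 xk) in Hrat by (field; lra).
  assert (HMe : M * e = - c / 4) by (unfold e; field; lra).
  assert (D <= t k * e) by nra.
  assert (M * D <= t k * (- c / 4)) by nra.
  nra.
Qed.
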